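(* Let $A=\sum_{k=0}^Na_k\partial^k\in\mathcal V[\partial]$ be a hereditary differential operator of degree $N$. Then for all $0\le k\le N$, $d(a_k)\le N+1$ (the inequality being vacuous when $a_k$ is a quasiconstant).
   Context: $\mathcal V$ is an algebra of differential functions in one variable $u$ (commutative $\mathbb C$-algebra containing $R=\mathbb C[u,u',\dots]$ with commuting derivations $\partial/\partial u^{(n)}$ extending those of $R$ and $\partial/\partial x$ commuting with them and vanishing on $R$, each element having finitely many nonzero partial derivatives); total derivative $\partial=\sum_nu^{(n+1)}\frac{\partial}{\partial u^{(n)}}+\frac{\partial}{\partial x}$. Standing assumptions: $\mathcal V$ is a normal domain with fraction field $\mathcal K$; $\mathcal C=\ker\partial$ is algebraically closed. The differential order is $d(F)=\max\{n\ge0:\partial F/\partial u^{(n)}\ne0\}$; $F$ is a quasiconstant if this set is empty. $X_F=\sum_nF^{(n)}\frac{\partial}{\partial u^{(n)}}$; $D_F=\sum_n\frac{\partial F}{\partial u^{(n)}}\partial^n$. Differential operators with $\partial a=a\partial+a'$; $X_F$ acts on operators coefficientwise; $\mathcal L_F(L)=X_F(L)-[D_F,L]$. A differential operator $A$ is hereditary if $\mathcal L_{A(G)}(A)=A\,\mathcal L_G(A)$ for all $G\in\mathcal V$. *)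

(* Defs.v *)
From HB Require Import structures.
From mathcomp Require Import all_boot all_order all_algebra.
From mathcomp Require Import reals complex.
Set Implicit Arguments. Unset Strict Implicit. Unset Printing Implicit Defensive.
Import Order.TTheory GRing.Theory Num.Theory.
Local Open Scope ring_scope.

(* The base field C is the complex numbers, realised as  R[i] = complex R  for
   an arbitrary  R : realType  (every realType is the real line).
   A C-algebra is an integral domain V together with a ring morphism
   emb : C -> V. *)

Record dfdata (V : Type) := DFData {
  uvar : nat -> V;          (* uvar n = u^(n) *)
  pder : nat -> V -> V;     (* pder n = partial derivative d/du^(n) *)
  xder : V -> V;
  pbound : V -> nat         (* pder n f = 0 whenever pbound f <= n *)
}.

Definition is_derivation (V : comPzRingType) (D : V -> V) : Prop :=
  (forall a b : V, D (a + b) = D a + D b) /\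
  (forall a b : V, D (a * b) = D a * b + a * D b).

(* V contains R = C[u,u',...] via emb and uvar (algebraic independence of the
   u^(n) over C follows from the other axioms since V is a domain and C has
   characteristic 0); the pder n are commuting derivations extending
   d/du^(n) on R; xder is a derivation commuting with them and vanishing on R;
   every element has finitely many nonzero partial derivatives (bounded by
   pbound). *)
Definition diff_fun_alg (R : realType) (V : idomainType)
    (emb : {rmorphism R[i] -> V}) (D : dfdata V) : Prop :=
  [/\ (forall n, is_derivation (pder D n)) /\ is_derivation (xder D),
      (forall n (c : R[i]), pder D n (emb c) = 0) /\ (forall c : R[i], xder D (emb c) = 0),
      (forall n m, pder D n (uvar D m) = (n == m)%:R) /\ (forall m, xder D (uvar D m) = 0),
      (forall n m f, pder D n (pder D m f) = pder D m (pder D n f)) /\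
      (forall n f, pder D n (xder D f) = xder D (pder D n f)) &
      forall f n, (pbound D f <= n)%N -> pder D n f = 0 ].

Section DiffFun.
Variable V : idomainType.
Variable D : dfdata V.

Definition dtot (f : V) : V :=
  \sum_(n < pbound D f) uvar D n.+1 * pder D n f + xder D f.

(* differential order: max {n | pder n F != 0}; equals 0 (harmlessly) for
   quasiconstants *)
Definition quasiconstant (F : V) : Prop := forall n, pder D n F = 0.
Definition dord (F : V) : nat := \max_(n < pbound D F | pder D n F != 0) n.

(* Differential operators  L = sum_k L`_k d^k  are represented by their
   coefficient polynomials  L : {poly V}  ('X^k standing for d^k).  Only the
   additive structure of {poly V} is used; the (noncommutative) composition of
   operators is opmul below, using  d a = a d + a'  i.e.
   (a d^i)(b d^j) = sum_l binom(i,l) a b^(l) d^(i+j-l). *)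
Definition opmul (L M : {poly V}) : {poly V} :=
  \sum_(i < size L) \sum_(j < size M) \sum_(l < i.+1)
     (L`_i * 'C(i, l)%:R * iter l dtot M`_j)%:P * 'X^(i + j - l).

Definition opapply (L : {poly V}) (G : V) : V :=
  \sum_(k < size L) L`_k * iter k dtot G.

Definition evX (F g : V) : V :=
  \sum_(n < pbound D g) iter n dtot F * pder D n g.

Definition evXop (F : V) (L : {poly V}) : {poly V} :=
  \poly_(k < size L) evX F L`_k.

Definition frechet (F : V) : {poly V} := \poly_(n < pbound D F) pder D n F.

Definition lieder (F : V) (L : {poly V}) : {poly V} :=
  evXop F L - (opmul (frechet F) L - opmul L (frechet F)).

Definition hereditary (A : {poly V}) : Prop :=
  forall G : V, lieder (opapply A G) A = opmul A (lieder G A).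

End DiffFun.

(* An element
   p/q (q != 0) of the fraction field is integral over V iff there is a monic
   relation (p/q)^n + c_{n-1}(p/q)^{n-1} + ... + c_0 = 0, i.e. after clearing
   denominators  p^n + sum_{i<n} c_i p^i q^(n-i) = 0;  it lies in V iff q | p. *)
Definition normal_domain (V : idomainType) : Prop :=
  forall (p q : V) (n : nat) (c : nat -> V), q != 0 ->
    p ^+ n + \sum_(i < n) c i * p ^+ i * q ^+ (n - i) = 0 ->
    exists r : V, p = r * q.

Definition constants_alg_closed (V : idomainType) (D : dfdata V) : Prop :=
  (forall c : V, dtot D c = 0 -> c != 0 -> exists e : V, e * c = 1) /\
  (forall (n : nat) (c : nat -> V), (0 < n)%N ->
     (forall i, (i < n)%N -> dtot D (c i) = 0) ->
     exists r : V, dtot D r = 0 /\ r ^+ n + \sum_(i < n) c i * r ^+ i = 0).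

(* Main.v *)
Require Import Defs.
From HB Require Import structures.
From mathcomp Require Import all_boot all_order all_algebra.
From mathcomp Require Import reals complex.
From mathcomp Require Import zify ring.
Import GRing.Theory Num.Theory.
Local Open Scope ring_scope.

Section Deriv.
Variable (V : comPzRingType) (Dr : V -> V).
Hypothesis HD : is_derivation Dr.
Lemma der_add a b : Dr (a + b) = Dr a + Dr b. Proof. by case: HD. Qed.
Lemma der_mul a b : Dr (a * b) = Dr a * b + a * Dr b. Proof. by case: HD. Qed.
Lemma der0 : Dr 0 = 0.
Proof. by apply: (addrI (Dr 0)); rewrite addr0 -der_add addr0. Qed.
Lemma derN a : Dr (- a) = - Dr a.
Proof. by apply/eqP; rewrite -subr_eq0 opprK -der_add addNr der0. Qed.
Lemma derB a b : Dr (a - b) = Dr a - Dr b.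
Proof. by rewrite der_add derN. Qed.
Lemma der1 : Dr 1 = 0.
Proof.
have h : Dr 1 = Dr 1 + Dr 1 by rewrite -{1}(mulr1 1) der_mul mulr1 mul1r.
by apply: (addrI (Dr 1)); rewrite addr0 -h.
Qed.
Lemma der_sum (I : Type) (r : seq I) (P : pred I) (F : I -> V) :
  Dr (\sum_(i <- r | P i) F i) = \sum_(i <- r | P i) Dr (F i).
Proof. by apply: (big_morph Dr der_add der0). Qed.
Lemma der_natr k : Dr k%:R = 0.
Proof. by elim: k => [|k IH]; rewrite ?der0 // -addn1 natrD der_add IH der1 addr0. Qed.
Lemma der_mulrn a k : Dr (a *+ k) = Dr a *+ k.
Proof. by elim: k => [|k IH]; rewrite ?mulr0n ?der0 // !mulrS der_add IH. Qed.
End Deriv.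
Arguments der_add {V Dr}.
Arguments der_mul {V Dr}.
Arguments der0 {V Dr}.
Arguments derN {V Dr}.
Arguments derB {V Dr}.
Arguments der1 {V Dr}.
Arguments der_sum {V Dr} HD {I}.
Arguments der_natr {V Dr}.
Arguments der_mulrn {V Dr}.


Lemma sum_widen (V : zmodType) (F : nat -> V) a b : (a <= b)%N ->
  (forall i, (a <= i)%N -> F i = 0) ->
  \sum_(i < a) F i = \sum_(i < b) F i.
Proof.
move=> ab H; rewrite -(subnKC ab) big_split_ord /= [X in _ = _ + X]big1 ?addr0 //.
by move=> i _; apply: H; rewrite leq_addr.
Qed.

Lemma sum_delta (V : pzSemiRingType) (F : nat -> V) B n :
  \sum_(i < B) F i * (i == n :> nat)%:R = if (n < B)%N then F n else 0.
Proof.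
under eq_bigr => i _ do rewrite mulr_natr mulrb.
by rewrite -big_mkcond big_ord1_eq.
Qed.
Arguments sum_widen {V}.
Arguments sum_delta {V}.
Lemma vander (W : zmodType) i m (g : nat -> W) :
  \sum_(l < m.+1) \sum_(r < i.+1) g (l + r)%N *+ ('C(m, l) * 'C(i, r)) =
  \sum_(s < (i + m).+1) g s *+ 'C(i + m, s).
Proof.
elim: m g => [|m IH] g.
  rewrite big_ord_recl big_ord0 addr0 addn0; apply: eq_bigr => r _.
  by rewrite bin0 mul1n add0n.
rewrite big_ord_recl /=.
have step : forall l : 'I_m.+1,
  \sum_(r < i.+1) g (bump 0 l + r)%N *+ ('C(m.+1, bump 0 l) * 'C(i, r)) =
  \sum_(r < i.+1) g (l.+1 + r)%N *+ ('C(m, l.+1) * 'C(i, r)) +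
  \sum_(r < i.+1) (fun s => g s.+1) (l + r)%N *+ ('C(m, l) * 'C(i, r)).
  move=> l; rewrite -big_split; apply: eq_bigr => r _.
  by rewrite /bump /= add1n binS mulnDl mulrnDr addSn.
rewrite (eq_bigr _ (fun l _ => step l)) big_split /= addrA.
have -> : \sum_(r < i.+1) g (0 + r)%N *+ ('C(m.+1, 0) * 'C(i, r)) +
   \sum_(l < m.+1) \sum_(r < i.+1) g (l.+1 + r)%N *+ ('C(m, l.+1) * 'C(i, r)) =
   \sum_(l < m.+1) \sum_(r < i.+1) g (l + r)%N *+ ('C(m, l) * 'C(i, r)).
  rewrite [RHS]big_ord_recl /=; congr (_ + _).
    by apply: eq_bigr => r _; rewrite !bin0.
  rewrite big_ord_recr /= [X in _ + X]big1 ?addr0 //.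
  by move=> r _; rewrite bin_small // mul0n mulr0n.
rewrite IH (IH (fun s => g s.+1)) addnS.
have -> : \sum_(s < (i + m).+2) g s *+ 'C((i + m).+1, s) =
  \sum_(s < (i + m).+1) g s *+ 'C(i + m, s) +
  \sum_(s < (i + m).+1) g s.+1 *+ 'C(i + m, s).
  rewrite big_ord_recl /=.
  have st2 : forall s : 'I_(i+m).+1, g (bump 0 s) *+ 'C((i + m).+1, bump 0 s) =
     g s.+1 *+ 'C(i + m, s.+1) + g s.+1 *+ 'C(i + m, s).
    by move=> s; rewrite /bump /= add1n binS mulrnDr.
  rewrite (eq_bigr _ (fun s _ => st2 s)) big_split /= addrA; congr (_ + _).
  rewrite [RHS]big_ord_recl /=; congr (_ + _); first by rewrite !bin0.
  rewrite big_ord_recr /= bin_small ?mulr0n ?addr0 //.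
by [].
Qed.
Section DF.
Variable (V : idomainType) (D : dfdata V).
Hypothesis Hpd : forall n, is_derivation (pder D n).
Hypothesis Hxd : is_derivation (xder D).
Hypothesis Hpu : forall n m, pder D n (uvar D m) = (n == m)%:R.
Hypothesis Hxu : forall m, xder D (uvar D m) = 0.
Hypothesis Hcomm : forall n m f, pder D n (pder D m f) = pder D m (pder D n f).
Hypothesis Hcommx : forall n f, pder D n (xder D f) = xder D (pder D n f).
Hypothesis Hpb : forall f n, (pbound D f <= n)%N -> pder D n f = 0.

Local Notation pd := (pder D).
Local Notation u := (uvar D).
Local Notation xd := (xder D).
Local Notation dt := (dtot D).

Lemma dtot_bound B f : (pbound D f <= B)%N ->
  dt f = \sum_(n < B) u n.+1 * pd n f + xd f.
Proof.
move=> hB; rewrite /dtot; congr (_ + _).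
apply: (@sum_widen _ (fun n => u n.+1 * pd n f)) => // i hi.
by rewrite Hpb // mulr0.
Qed.

Lemma dtD f g : dt (f + g) = dt f + dt g.
Proof.
pose B := (pbound D f + pbound D g + pbound D (f + g)%R)%N.
rewrite (@dtot_bound B f) ?(@dtot_bound B g) ?(@dtot_bound B (f+g)); try (rewrite /B; lia).
rewrite (der_add (Hxd)) addrACA -big_split /=; congr (_ + _).
by apply: eq_bigr => i _; rewrite (der_add (Hpd i)) mulrDr.
Qed.

Lemma dt0 : dt 0 = 0.
Proof. by apply: (addrI (dt 0)); rewrite addr0 -dtD addr0. Qed.

Lemma dtN f : dt (- f) = - dt f.
Proof. by apply/eqP; rewrite -subr_eq0 opprK -dtD addNr dt0. Qed.

Lemma dt_sum (I : Type) (r : seq I) (P : pred I) (F : I -> V) :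
  dt (\sum_(i <- r | P i) F i) = \sum_(i <- r | P i) dt (F i).
Proof. by apply: (big_morph dt dtD dt0). Qed.

Lemma dt_mulrn a k : dt (a *+ k) = dt a *+ k.
Proof. by elim: k => [|k IH]; rewrite ?mulr0n ?dt0 // !mulrS dtD IH. Qed.

Lemma dt_natr_mul k a : dt (k%:R * a) = k%:R * dt a.
Proof. by rewrite !mulr_natl dt_mulrn. Qed.

Lemma dt1 : dt 1 = 0.
Proof.
rewrite /dtot (der1 Hxd) addr0 big1 // => i _.
by rewrite (der1 (Hpd i)) mulr0.
Qed.

Lemma pbound_uvar m : (m < pbound D (u m))%N.
Proof.
rewrite ltnNge; apply/negP => h; have := Hpb _ _ h; rewrite Hpu eqxx => /eqP.
by rewrite oner_eq0.
Qed.

Lemma dt_uvar m : dt (u m) = u m.+1.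
Proof.
rewrite (@dtot_bound (pbound D (u m)) _) //.
under eq_bigr => i _ do rewrite Hpu.
by rewrite (sum_delta (fun i => u i.+1)) pbound_uvar Hxu addr0.
Qed.

Lemma pd_dt j f : pd j (dt f) = (if j is j'.+1 then pd j' f else 0) + dt (pd j f).
Proof.
pose B := (pbound D f + pbound D (pd j f) + j.+1)%N.
rewrite (@dtot_bound B f) ?(@dtot_bound B (pd j f)); try (rewrite /B; lia).
rewrite (der_add (Hpd j)) (der_sum (Hpd j)) Hcommx addrA; congr (_ + _).
under eq_bigr => i _ do rewrite (der_mul (Hpd j)) Hpu (Hcomm j i).
rewrite big_split /=; congr (_ + _).
have hB : (j < B)%N by rewrite /B; lia.
move: B hB => B hB; case: j hB => [|j] hB /=.
  by rewrite big1 // => i _; rewrite mul0r.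
under eq_bigr => i _ do rewrite eqSS mulrC eq_sym.
by rewrite (sum_delta (fun i => pd i f)) ifT //; apply: ltnW.
Qed.

Definition bnd (f : V) (b : nat) := forall j, (b <= j)%N -> pd j f = 0.

Lemma bnd_pb f : bnd f (pbound D f).
Proof. by move=> j hj; apply: Hpb. Qed.

Lemma bnd_mono f b b' : (b <= b')%N -> bnd f b -> bnd f b'.
Proof. by move=> hb h j hj; apply: h; apply: leq_trans hj. Qed.

Lemma bnd0 b : bnd 0 b.
Proof. by move=> j _; apply: (der0 (Hpd j)). Qed.

Lemma bndD f g b : bnd f b -> bnd g b -> bnd (f + g) b.
Proof. by move=> hf hg j hj; rewrite (der_add (Hpd j)) hf ?hg ?addr0. Qed.

Lemma bndM f g b : bnd f b -> bnd g b -> bnd (f * g) b.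
Proof. by move=> hf hg j hj; rewrite (der_mul (Hpd j)) hf ?hg ?mulr0 ?mul0r ?addr0. Qed.

Lemma bnd_natr k b : bnd k%:R b.
Proof. by move=> j _; apply: (der_natr (Hpd j)). Qed.

Lemma bnd_pd f b i : bnd f b -> bnd (pd i f) b.
Proof. by move=> hf j hj; rewrite Hcomm hf ?(der0 (Hpd i)). Qed.

Lemma bnd_dt f b : bnd f b -> bnd (dt f) b.+1.
Proof.
move=> hf j hj; rewrite pd_dt; case: j hj => [|j] // hj.
by rewrite hf // hf ?dt0 ?addr0 //; apply: leq_trans hj.
Qed.

Lemma pdM_const f g j : pd j f = 0 -> pd j (f * g) = f * pd j g.
Proof. by move=> h; rewrite (der_mul (Hpd j)) h mul0r add0r. Qed.

Lemma iter_dt0 l : iter l dt 0 = 0.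
Proof. by elim: l => //= l ->; rewrite dt0. Qed.
Lemma iter_dtD l f g : iter l dt (f + g) = iter l dt f + iter l dt g.
Proof. by elim: l => //= l ->; rewrite dtD. Qed.
Lemma iter_dtN l f : iter l dt (- f) = - iter l dt f.
Proof. by elim: l => //= l ->; rewrite dtN. Qed.
Lemma iter_dt_natr_mul l k f : iter l dt (k%:R * f) = k%:R * iter l dt f.
Proof. by elim: l => //= l ->; rewrite dt_natr_mul. Qed.
Lemma iter_dt1 l : (0 < l)%N -> iter l dt 1 = 0.
Proof. by case: l => // l _; rewrite iterSr /= dt1 iter_dt0. Qed.
Lemma iter_dt_uvar l m : iter l dt (u m) = u (l + m).
Proof. by elim: l => //= l ->; rewrite dt_uvar. Qed.

Definition opmulB B1 B2 (L M : {poly V}) : {poly V} :=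
  \sum_(i < B1) \sum_(j < B2) \sum_(l < i.+1)
     (L`_i * 'C(i, l)%:R * iter l dt M`_j)%:P * 'X^(i + j - l).

Lemma opmul_bound B1 B2 (L M : {poly V}) : (size L <= B1)%N -> (size M <= B2)%N ->
  opmul D L M = opmulB B1 B2 L M.
Proof.
move=> h1 h2; rewrite /opmul /opmulB.
rewrite (@sum_widen _ (fun i => \sum_(j < size M) \sum_(l < i.+1)
     (L`_i * 'C(i, l)%:R * iter l dt M`_j)%:P * 'X^(i + j - l)) _ B1) //; last first.
  move=> i hi; apply: big1 => j _; apply: big1 => l _.
  by rewrite nth_default // !(mul0r, polyC0).
apply: eq_bigr => i _.
apply: (@sum_widen _ (fun j => \sum_(l < i.+1)
     (L`_i * 'C(i, l)%:R * iter l dt M`_j)%:P * 'X^(i + j - l))) => // j hj.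
by apply: big1 => l _; rewrite (nth_default _ hj) iter_dt0 mulr0 polyC0 mul0r.
Qed.

Lemma opmulB_Dl B1 B2 (L1 L2 M : {poly V}) :
  opmulB B1 B2 (L1 + L2) M = opmulB B1 B2 L1 M + opmulB B1 B2 L2 M.
Proof.
rewrite /opmulB -big_split; apply: eq_bigr => i _.
rewrite -big_split; apply: eq_bigr => j _.
rewrite -big_split; apply: eq_bigr => l _.
by rewrite coefD !mulrDl polyCD mulrDl.
Qed.

Lemma opmulB_Dr B1 B2 (L M1 M2 : {poly V}) :
  opmulB B1 B2 L (M1 + M2) = opmulB B1 B2 L M1 + opmulB B1 B2 L M2.
Proof.
rewrite /opmulB -big_split; apply: eq_bigr => i _.
rewrite -big_split; apply: eq_bigr => j _.
rewrite -big_split; apply: eq_bigr => l _.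
by rewrite coefD iter_dtD !mulrDr polyCD mulrDl.
Qed.

Lemma opmulB_Nl B1 B2 (L M : {poly V}) : opmulB B1 B2 (- L) M = - opmulB B1 B2 L M.
Proof.
rewrite /opmulB -sumrN; apply: eq_bigr => i _.
rewrite -sumrN; apply: eq_bigr => j _.
rewrite -sumrN; apply: eq_bigr => l _.
by rewrite coefN !mulNr polyCN mulNr.
Qed.

Lemma opmulB_Nr B1 B2 (L M : {poly V}) : opmulB B1 B2 L (- M) = - opmulB B1 B2 L M.
Proof.
rewrite /opmulB -sumrN; apply: eq_bigr => i _.
rewrite -sumrN; apply: eq_bigr => j _.
rewrite -sumrN; apply: eq_bigr => l _.
by rewrite coefN iter_dtN !mulrN polyCN mulNr.
Qed.

Lemma opmulDl (L1 L2 M : {poly V}) : opmul D (L1 + L2) M = opmul D L1 M + opmul D L2 M.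
Proof.
pose B1 := (size L1 + size L2 + size (L1 + L2)%R)%N.
rewrite !(@opmul_bound B1 (size M)) //; try (rewrite /B1; lia).
exact: opmulB_Dl.
Qed.

Lemma opmulDr (L M1 M2 : {poly V}) : opmul D L (M1 + M2) = opmul D L M1 + opmul D L M2.
Proof.
pose B2 := (size M1 + size M2 + size (M1 + M2)%R)%N.
rewrite !(@opmul_bound (size L) B2) //; try (rewrite /B2; lia).
exact: opmulB_Dr.
Qed.

Lemma opmulNl (L M : {poly V}) : opmul D (- L) M = - opmul D L M.
Proof. by rewrite !(@opmul_bound (size L) (size M)) ?size_polyN // opmulB_Nl. Qed.

Lemma opmulNr (L M : {poly V}) : opmul D L (- M) = - opmul D L M.
Proof. by rewrite !(@opmul_bound (size L) (size M)) ?size_polyN // opmulB_Nr. Qed.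

Lemma opmulBl (L1 L2 M : {poly V}) : opmul D (L1 - L2) M = opmul D L1 M - opmul D L2 M.
Proof. by rewrite opmulDl opmulNl. Qed.
Lemma opmulBr (L M1 M2 : {poly V}) : opmul D L (M1 - M2) = opmul D L M1 - opmul D L M2.
Proof. by rewrite opmulDr opmulNr. Qed.

Lemma opmul0l (M : {poly V}) : opmul D 0 M = 0.
Proof. by rewrite /opmul size_poly0 big_ord0. Qed.
Lemma opmul0r (L : {poly V}) : opmul D L 0 = 0.
Proof. by rewrite /opmul size_poly0; apply: big1 => i _; rewrite big_ord0. Qed.

Lemma opmul_suml (I : Type) (r : seq I) (Pr : pred I) (F : I -> {poly V}) (M : {poly V}) :
  opmul D (\sum_(i <- r | Pr i) F i) M = \sum_(i <- r | Pr i) opmul D (F i) M.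
Proof. by apply: (big_morph (fun L => opmul D L M) (fun x y => opmulDl x y M) (opmul0l M)). Qed.
Lemma opmul_sumr (I : Type) (r : seq I) (Pr : pred I) (F : I -> {poly V}) (L : {poly V}) :
  opmul D L (\sum_(i <- r | Pr i) F i) = \sum_(i <- r | Pr i) opmul D L (F i).
Proof. by apply: (big_morph (fun M => opmul D L M) (fun x y => opmulDr L x y) (opmul0r L)). Qed.
Lemma coef_mono (c : V) (k e : nat) : ((c%:P * 'X^k)%R)`_e = c * (e == k)%:R.
Proof. by rewrite coefCM coefXn. Qed.

Lemma size_mono (c : V) (k : nat) : (size (c%:P * 'X^k)%R <= k.+1)%N.
Proof. by apply/leq_sizeP => j hj; rewrite coef_mono; case: eqP hj => [->|]; rewrite ?ltnn ?mulr0. Qed.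

Lemma opmul_mono (a b : V) (p q : nat) :
  opmul D (a%:P * 'X^p) (b%:P * 'X^q) =
  \sum_(l < p.+1) (a * 'C(p, l)%:R * iter l dt b)%:P * 'X^(p + q - l).
Proof.
rewrite (@opmul_bound p.+1 q.+1) ?size_mono // /opmulB big_ord_recr /=.
rewrite big1 ?add0r; last first.
  move=> i _; apply: big1 => j _; apply: big1 => l _.
  by rewrite coef_mono (ltn_eqF (ltn_ord i)) !(mulr0, mul0r, polyC0).
rewrite big_ord_recr /= big1 ?add0r; last first.
  move=> j _; apply: big1 => l _.
  by rewrite (coef_mono b) (ltn_eqF (ltn_ord j)) mulr0 iter_dt0 !(mulr0, mul0r, polyC0).
by apply: eq_bigr => l _; rewrite !coef_mono !eqxx !mulr1.
Qed.

Lemma opmul_size_vanish (L M : {poly V}) e : (size L + size M <= e.+1)%N -> (opmul D L M)`_e = 0.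
Proof.
move=> h; rewrite /opmul !coef_sum; apply: big1 => i _.
rewrite coef_sum; apply: big1 => j _; rewrite coef_sum; apply: big1 => l _.
rewrite coef_mono; case: eqP; rewrite ?mulr0 // => he.
have := ltn_ord i; have := ltn_ord j; lia.
Qed.

Lemma poly_split (L : {poly V}) p : (size L <= p.+1)%N ->
  L = ((L`_p)%:P * 'X^p + (L - (L`_p)%:P * 'X^p))%R /\
  (size (L - (L`_p)%:P * 'X^p)%R <= p)%N.
Proof.
move=> h; split; first by rewrite addrC subrK.
apply/leq_sizeP => j hj; rewrite coefB coef_mono.
case: eqP => [->|ne]; first by rewrite mulr1 subrr.
by rewrite mulr0 subr0; apply/(leq_sizeP _ _ h); lia.
Qed.

Lemma size_le0 (L : {poly V}) : (size L <= 0)%N -> L = 0.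
Proof. by rewrite leqn0 size_poly_eq0 => /eqP. Qed.

Lemma opmul_top (L M : {poly V}) p q : (size L <= p)%N -> (size M <= q)%N ->
  (opmul D L M)`_(p.-1 + q.-1) = L`_p.-1 * M`_q.-1.
Proof.
case: p => [|p] hL; first by rewrite (size_le0 _ hL) opmul0l coef0 coef0 mul0r.
case: q => [|q] hM; first by rewrite (size_le0 _ hM) opmul0r coef0 coef0 mulr0.
have [eL hL'] := poly_split _ _ hL; have [eM hM'] := poly_split _ _ hM.
move: (L`_p) (L - _) eL hL' => a L' -> hL'.
move: (M`_q) (M - _) eM hM' => b M' -> hM' /=.
rewrite opmulDl !opmulDr !coefD.
rewrite (@opmul_size_vanish (a%:P * 'X^p) (M')); last first.
  by have := size_mono a p; lia.
rewrite (@opmul_size_vanish (L') (b%:P * 'X^q)); last first.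
  by have := size_mono b q; lia.
rewrite (@opmul_size_vanish (L') (M')); last by lia.
rewrite !addr0.
rewrite opmul_mono coef_sum big_ord_recl /= big1.
  by rewrite coef_mono bin0 subn0 eqxx /= !mulr1 addr0.
move=> l _; rewrite coef_mono; case: eqP; rewrite ?mulr0 //.
have := ltn_ord l; rewrite /bump /= => hl h; exfalso; lia.
Qed.
Lemma opmul_top2 (L M : {poly V}) p q : (size L <= p.+1)%N -> (size M <= q.+1)%N ->
  (0 < p + q)%N ->
  (opmul D L M)`_(p + q).-1 =
  L`_p * p%:R * dt M`_q + L`_p * M`_q.-1 *+ (0 < q)%N + L`_p.-1 * M`_q *+ (0 < p)%N.
Proof.
move=> hL hM hpq.
have [eL hL'] := poly_split _ _ hL; have [eM hM'] := poly_split _ _ hM.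
move: (L`_p) (L - _) eL hL' => a L' -> hL'.
move: (M`_q) (M - _) eM hM' => b M' -> hM' /=.
rewrite opmulDl !opmulDr !coefD.
rewrite (@opmul_size_vanish L' M'); last by lia.
rewrite addr0.
have e1 : (opmul D (a%:P * 'X^p) M')`_(p + q).-1 = a * M'`_q.-1 *+ (0 < q)%N.
  case: q hM' {hM hpq} => [|q] hM'; first by rewrite (size_le0 _ hM') opmul0r coef0 mulr0n.
  have -> : ((p + q.+1).-1 = p.+1.-1 + q.+1.-1)%N by rewrite addnS.
  by rewrite (opmul_top _ _ _ _ (size_mono a p) hM') coef_mono eqxx mulr1.
have e2 : (opmul D L' (b%:P * 'X^q))`_(p + q).-1 = L'`_p.-1 * b *+ (0 < p)%N.
  case: p hL' {hL hpq e1} => [|p] hL'; first by rewrite (size_le0 _ hL') opmul0l coef0 mulr0n.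
  have -> : ((p.+1 + q).-1 = p.+1.-1 + q.+1.-1)%N by rewrite addSn.
  by rewrite (opmul_top _ _ _ _ hL' (size_mono b q)) coef_mono eqxx mulr1.
rewrite e1 e2.
have hL0 : L'`_p = 0 by apply: (leq_sizeP _ _ hL').
have hM0 : M'`_q = 0 by apply: (leq_sizeP _ _ hM').
have e3 : (opmul D (a%:P * 'X^p) (b%:P * 'X^q))`_(p + q).-1 = a * p%:R * dt b.
  rewrite opmul_mono coef_sum.
  case: p {hL hL' e1 e2 hL0} hpq => [|p] hpq.
    rewrite big_ord_recl big_ord0 addr0 coef_mono /= subn0.
    rewrite (_ : (q.-1 == q) = false); last lia.
    by rewrite mulr0 mulr0 mul0r.
  rewrite big_ord_recl big_ord_recl big1.
    rewrite !coef_mono /= subn0 bin1.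
    rewrite (_ : ((p.+1 + q).-1 == p.+1 + q)%N = false); last lia.
    rewrite (_ : ((p.+1 + q).-1 == p.+1 + q - 1)%N = true); last lia.
    by rewrite (_ : (true%:R : V) = 1) // (_ : (false%:R:V) = 0) // mulr0 add0r mulr1 addr0.
  move=> l _; rewrite coef_mono /bump /=.
  rewrite (_ : ((p.+1 + q).-1 == _)%N = false); first by rewrite (_ : (false%:R : V) = 0) // mulr0.
  have := ltn_ord l; rewrite /bump /=; lia.
rewrite !coef_mono e3; congr (_ + _ + _).
  case: q {hM hM' e1 e2 e3 hM0 hpq} => [|q] //=.
  by rewrite (_ : (q == q.+1) = false) ?mulr0 ?add0r //; lia.
case: p {hL hL' e1 e2 e3 hL0 hpq} => [|p] //=.
by rewrite (_ : (p == p.+1) = false) ?mulr0 ?add0r //; lia.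
Qed.
Lemma poly_expand (P : {poly V}) : P = \sum_(i < size P) (P`_i)%:P * 'X^i.
Proof. by rewrite -{1}(coefK P) poly_def; apply: eq_bigr => i _; rewrite mul_polyC. Qed.

Lemma opmulXr (P : {poly V}) m : opmul D P 'X^m = P * 'X^m.
Proof.
rewrite (@opmul_bound (size P) m.+1) ?size_polyXn // /opmulB.
transitivity (\sum_(i < size P) (P`_i)%:P * 'X^i * 'X^m); last first.
  by rewrite -mulr_suml -(poly_expand P).
apply: eq_bigr => i _.
rewrite big_ord_recr /= big1 ?add0r; last first.
  move=> j _; apply: big1 => l _.
  by rewrite coefXn (ltn_eqF (ltn_ord j)) iter_dt0 mulr0 polyC0 mul0r.
rewrite big_ord_recl big1 ?addr0; last first.
  by move=> l _; rewrite coefXn eqxx iter_dt1 // mulr0 polyC0 mul0r.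
by rewrite coefXn eqxx bin0 subn0 /= !mulr1 -mulrA -exprD.
Qed.

Lemma opmul_assocX (P Q : {poly V}) m :
  opmul D (P * 'X^m) Q = opmul D P (opmul D 'X^m Q).
Proof.
have eP : P * 'X^m = \sum_(i < size P) (P`_i)%:P * 'X^(i + m).
  transitivity (\sum_(i < size P) (P`_i)%:P * 'X^i * 'X^m).
    by rewrite -mulr_suml -(poly_expand P).
  by apply: eq_bigr => i _; rewrite -mulrA -exprD.
rewrite eP opmul_suml [in RHS](poly_expand P) opmul_suml; apply: eq_bigr => i _.
rewrite [in LHS](poly_expand Q) opmul_sumr.
rewrite [in RHS](poly_expand Q) (opmul_sumr _ _ _ _ 'X^m) opmul_sumr.
apply: eq_bigr => j _.
set a := P`_i; set b := Q`_j.
rewrite opmul_mono (_ : 'X^m = 1%:P * 'X^m); last by rewrite polyC1 mul1r.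
rewrite (opmul_mono 1 b m j) opmul_sumr.
pose g := fun s => (a * iter s dt b)%:P * 'X^(i + m + j - s).
transitivity (\sum_(s < (i + m).+1) g s *+ 'C(i + m, s)).
  apply: eq_bigr => s _; rewrite /g -mulrnAl -polyCMn.
  by rewrite mulrAC mulr_natr.
rewrite -vander; apply: eq_bigr => l _; rewrite opmul_mono; apply: eq_bigr => r _.
rewrite /g -mulrnAl -polyCMn mul1r iter_dt_natr_mul -iterD.
have hl := ltn_ord l.
rewrite (_ : (i + (m + j - l) - r = i + m + j - (l + r))%N); last by lia.
congr (_%:P * _); rewrite (addnC r l) mulr_natl mulr_natr.
by rewrite mulrnAl mulrnAr -mulrnA mulnC.
Qed.
Lemma coef_frechet F j : (frechet D F)`_j = pd j F.
Proof. by rewrite coef_poly; case: ltnP => // h; rewrite Hpb. Qed.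

Lemma frechet_uvar m : frechet D (u m) = 'X^m.
Proof. by apply/polyP => j; rewrite coef_frechet Hpu coefXn. Qed.

Lemma opapply_uvar (A : {poly V}) m :
  opapply D A (u m) = \sum_(k < size A) A`_k * u (k + m).
Proof. by rewrite /opapply; apply: eq_bigr => k _; rewrite iter_dt_uvar. Qed.

Lemma pd_delta (c : nat -> V) N m j : (forall k, bnd (c k) m) ->
  (forall k, (N.+1 <= k)%N -> c k = 0) ->
  pd (j + m) (\sum_(k < N.+1) c k * u (k + m)) = c j.
Proof.
move=> hc hcN; rewrite (der_sum (Hpd _)).
under eq_bigr => k _ do rewrite (der_mul (Hpd _)) (hc k) ?leq_addl // mul0r add0r Hpu eqn_add2r eq_sym.
rewrite (sum_delta c); case: ltnP => // h; by rewrite hcN.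
Qed.

Lemma key (A : {poly V}) N n : size A = N.+1 -> (N.+2 <= n)%N ->
  (forall k, bnd (A`_k) n.+1) -> hereditary D A ->
  A`_N * N%:R * dt (\sum_(k < N.+1) pd n A`_k * u (k + n.+2)) =
  (\sum_(k < N.+1) pd n A`_k * u (k + n.+2)) * n%:R * dt A`_N.
Proof.
move=> HN hn hb Hher.
set m := n.+2.
pose F := opapply D A (u m).
pose Dl := \poly_(j < n.+1) \sum_(k < size A) pd j A`_k * u (k + m).
have hF : frechet D F = Dl + A * 'X^m.
  apply/polyP => j; rewrite coef_frechet coefD coef_poly coefMXn /F opapply_uvar.
  rewrite (der_sum (Hpd _)).
  under eq_bigr => k _ do rewrite (der_mul (Hpd _)) Hpu.
  rewrite big_split /=; congr (_ + _).
    case: ltnP => // hj; apply: big1 => k _; by rewrite hb // mul0r.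
  case: ltnP => hj.
    apply: big1 => k _; rewrite (_ : (j == k + m)%N = false) ?mulr0 //; lia.
  have eqk : forall k : nat, (j == k + m)%N = (k == (j - m)%N).
    by move=> k; apply/eqP/eqP; lia.
  under eq_bigr => k _ do rewrite eqk.
  rewrite (sum_delta (fun k => A`_k)); case: ltnP => // hs.
  by rewrite nth_default.
have := Hher (u m).
rewrite /lieder -/F hF frechet_uvar opmulDl opmulDr opmulXr opmul_assocX opmulBr opmulBr.
move=> /(congr1 (fun p : {poly V} => p`_((N + n).-1))).
rewrite !coefB !coefD.
rewrite [X in X - _ = _]coef_poly ifF; last by rewrite HN; lia.
rewrite (opmul_size_vanish A (evXop D (u m) A)); last first.
  have : (size (evXop D (u m) A) <= size A)%N by apply: size_poly.
  rewrite HN; lia.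
set x := (opmul D A (opmul D 'X^m A))`_((N + n).-1).
set y := (opmul D A (A * 'X^m))`_((N + n).-1).
move=> E.
have E2 : (opmul D A Dl)`_((N + n).-1) = (opmul D Dl A)`_((n + N).-1).
  apply/eqP; rewrite -subr_eq0 addnC; apply/eqP.
  transitivity ((0 - ((opmul D Dl A)`_((n + N).-1) + x - ((opmul D A Dl)`_((n + N).-1) + y)))
     - (0 - (x - y)) - 0); last by rewrite addnC E subrr subr0.
  rewrite addnC; ring.
move: E2; rewrite (opmul_top2 A Dl N n) ?HN ?size_poly //; last by lia.
rewrite (opmul_top2 Dl A n N) ?HN ?size_poly //; last by lia.
rewrite (_ : (0 < n)%N = true); last by lia.
rewrite !mulr1n coef_poly ltnSn HN -/m.
set d := \sum_(k < N.+1) _.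
move=> E3.
rewrite (mulrC d A`_N.-1) (mulrC Dl`_n.-1 A`_N) in E3.
apply: (addIr (A`_N * Dl`_n.-1 + A`_N.-1 * d *+ (0 < N)%N)).
by rewrite !addrA E3 addrAC.
Qed.
Lemma final_contra (A : {poly V}) N n k1 : size A = N.+1 -> (N.+2 <= n)%N ->
  (forall k, bnd A`_k n.+1) -> hereditary D A -> pd n A`_k1 != 0 ->
  (forall j, (0 < j)%N -> (j%:R : V) != 0) -> False.
Proof.
move=> HN hn hb Hher hk1 hchar.
have I := key A N n HN hn hb Hher.
move: I; set m := n.+2; set d := \sum_(k < N.+1) _ => I.
pose c k := pd n A`_k.
have hc : forall k, bnd (c k) m.
  by move=> k; apply: (@bnd_mono _ n.+1) => //; apply: bnd_pd.
have hcN : forall k, (N.+1 <= k)%N -> c k = 0.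
  by move=> k hk; rewrite /c nth_default ?HN // (der0 (Hpd n)).
have hAN : A`_N != 0.
  have : lead_coef A != 0 by rewrite lead_coef_eq0 -size_poly_eq0 HN.
  by rewrite lead_coefE HN.
have hbA : bnd (A`_N) m by apply: (@bnd_mono _ n.+1).
have hbdA : bnd (dt A`_N) m by apply: bnd_dt.
have hd : forall j, pd (j + m) d = c j.
  by move=> j; apply: pd_delta.
have hn0 : (n%:R : V) != 0 by apply: hchar; lia.
case: (posnP N) => [N0|Npos].
  subst N.
  have := congr1 (pd (0 + m)) I.
  rewrite mulr0 mul0r (der0 (Hpd _)).
  rewrite (der_mul (Hpd _)) (hbdA (0 + m)%N) // mulr0 addr0.
  rewrite (der_mul (Hpd _)) (der_natr (Hpd _)) mulr0 addr0 hd => /esym /eqP.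
  have hk0 : k1 = 0%N.
    case: k1 hk1 => // k1; rewrite -/(c k1.+1) hcN //; by rewrite eqxx.
  subst k1; rewrite -/(c 0%N) in hk1.
  rewrite !mulf_eq0 (negbTE hk1) (negbTE hn0) /= => /eqP hdt.
  have := pd_dt n.+1 A`_0.
  by rewrite hdt (der0 (Hpd _)) (hb 0%N n.+1) // dt0 addr0 => /esym/eqP; rewrite (negbTE hk1).
have EJ : forall j, A`_N * N%:R * (c j + dt (c j.+1)) = c j.+1 * n%:R * dt A`_N.
  move=> j; have := congr1 (pd (j.+1 + m)) I.
  rewrite (pdM_const (A`_N * N%:R) (dt d)); last first.
    apply: (bndM _ _ _ hbA (bnd_natr _ _)); lia.
  rewrite addSn pd_dt -addSn !hd.
  rewrite (der_mul (Hpd _)) (hbdA (j.+1 + m)%N) ?mulr0 ?addr0; last by lia.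
  by rewrite (der_mul (Hpd _)) (der_natr (Hpd _)) mulr0 addr0 hd.
have claim : forall s j, (N.+1 - s <= j)%N -> c j = 0.
  elim=> [|s IH] j hj; first by apply: hcN; lia.
  case: (leqP (N.+1 - s) j) => h; first by apply: IH.
  have hj1 : c j.+1 = 0 by apply: IH; lia.
  have := EJ j; rewrite hj1 dt0 addr0 mul0r mul0r => /eqP.
  by rewrite !mulf_eq0 (negbTE hAN) (negbTE (hchar N _)) //= => /eqP.
have := claim N.+1 k1; rewrite subnn => /(_ (leq0n _)) h.
by move: hk1; rewrite -/(c k1) h eqxx.
Qed.
Lemma dord_le F j : pd j F != 0 -> (j <= dord D F)%N.
Proof.
move=> h.
have hj : (j < pbound D F)%N.
  by rewrite ltnNge; apply/negP => /Hpb hz; rewrite hz eqxx in h.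
rewrite /dord.
exact: (@leq_bigmax_cond _ (fun i : 'I_(pbound D F) => pd i F != 0)
          (fun i => nat_of_ord i) (Ordinal hj)).
Qed.

Lemma dord_att F : (0 < dord D F)%N -> pd (dord D F) F != 0.
Proof.
rewrite /dord.
case: (posnP #|(fun i : 'I_(pbound D F) => pd i F != 0)|) => [c0|cpos].
  rewrite big_pred0 // => i; apply/negbTE/negP => hi.
  by move/card0_eq: c0 => /(_ i); rewrite unfold_in hi.
have [i0 Pi0 ->] := eq_bigmax_cond (fun i : 'I_(pbound D F) => nat_of_ord i) cpos.
by move: Pi0; rewrite unfold_in.
Qed.

Lemma main_sec (A : {poly V}) N : size A = N.+1 -> hereditary D A ->
  (forall j, (0 < j)%N -> (j%:R : V) != 0) ->
  forall k, (k <= N)%N -> (dord D A`_k <= N.+1)%N.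
Proof.
move=> HN Hher hchar k hk; rewrite leqNgt; apply/negP => hgt.
pose n := \max_(i < N.+1) dord D A`_i.
have hkn : (dord D A`_k <= n)%N.
  exact: (@leq_bigmax _ (fun i : 'I_N.+1 => dord D A`_i) (Ordinal (hk : (k < N.+1)%N))).
have [i1 hi1] := @eq_bigmax _ (fun i : 'I_N.+1 => dord D A`_i) (ltac:(by rewrite card_ord)).
have hb : forall k', bnd A`_k' n.+1.
  move=> k' j hj; case: (leqP k' N) => hk'.
    apply/eqP; apply: contraLR hj => /dord_le h; rewrite -ltnNge ltnS.
    apply: leq_trans h _.
    exact: (@leq_bigmax _ (fun i : 'I_N.+1 => dord D A`_i) (Ordinal (hk' : (k' < N.+1)%N))).
  by rewrite nth_default ?HN // (der0 (Hpd j)).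
apply: (final_contra A N n i1 HN) => //; first by lia.
rewrite /n hi1; apply: dord_att; rewrite -hi1 -/n; lia.
Qed.

End DF.

Theorem proposition2p20 (R : realType) (V : idomainType)
    (emb : {rmorphism R[i] -> V}) (D : dfdata V)
    (HV : diff_fun_alg emb D) (Hnormal : normal_domain V)
    (Hconst : constants_alg_closed D)
    (A : {poly V}) (N : nat) (HN : size A = N.+1)
    (Hher : hereditary D A) :
  forall k : nat, (k <= N)%N -> (dord D A`_k <= N.+1)%N.
Proof.
case: HV => [[Hpd Hxd] _ [Hpu Hxu] [Hcomm Hcommx] Hpb].
have hchar : forall j, (0 < j)%N -> (j%:R : V) != 0.
  move=> j hj; rewrite -(rmorph_nat emb) fmorph_eq0 pnatr_eq0.
  by rewrite -lt0n.
by apply: main_sec.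
Qed.
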